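(* Let $k$ be a positive integer and let $a_1\ge a_2\ge\cdots\ge a_{k+1}$ and $b_1\ge b_2\ge\cdots\ge b_{k+1}$ be real numbers in $[a,b]$ with $a_1\ge b_1$ and $(-1)^k a_{k+1}\le(-1)^k b_{k+1}$, such that $\sum_{i=1}^{k+1}a_i^j=\sum_{i=1}^{k+1}b_i^j$ for all integers $1\le j<k$. Then \[ \sum_{i=1}^{k+1}f(a_i)\ge\sum_{i=1}^{k+1}f(b_i) \] for every $k$ times differentiable $f:[a,b]\to\mathbb{R}$ with $f^{(k)}\ge 0$. *)

(* Defs.v *)
From Stdlib Require Import Reals.
Open Scope R_scope.

Definition deriv_on (a b : R) (g g' : R -> R) : Prop :=
  forall x, a <= x <= b ->
    limit1_in (fun y => (g y - g x) / (y - x))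
              (fun y => a <= y <= b /\ y <> x) (g' x) x.

Definition k_diff_nonneg_kth (k : nat) (a b : R) (f : R -> R) : Prop :=
  exists D : nat -> R -> R,
    (forall x, a <= x <= b -> D 0%nat x = f x) /\
    (forall i, (i < k)%nat -> deriv_on a b (D i) (D (S i))) /\
    (forall x, a <= x <= b -> 0 <= D k x).

(* Main.v *)
Require Import Defs.
From Stdlib Require Import Reals Lra Lia Psatz Arith Classical.
Open Scope R_scope.


Fixpoint sumn (n : nat) (g : nat -> R) : R :=
  match n with O => 0 | S n' => sumn n' g + g n' end.

Lemma sumn_ext n g h : (forall i, (i < n)%nat -> g i = h i) -> sumn n g = sumn n h.
Proof. induction n; simpl; intros H; auto. rewrite IHn by (intros; apply H; lia). rewrite H by lia. auto. Qed.

Lemma sumn_plus n g h : sumn n (fun i => g i + h i) = sumn n g + sumn n h.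
Proof. induction n; simpl; [lra|]. rewrite IHn; lra. Qed.

Lemma sumn_scal n c g : sumn n (fun i => c * g i) = c * sumn n g.
Proof. induction n; simpl; [lra|]. rewrite IHn; lra. Qed.

Lemma sumn_minus n g h : sumn n (fun i => g i - h i) = sumn n g - sumn n h.
Proof. induction n; simpl; [lra|]. rewrite IHn; lra. Qed.

Lemma sumn_zero n g : (forall i, (i < n)%nat -> g i = 0) -> sumn n g = 0.
Proof. induction n; simpl; intros H; auto. rewrite IHn by (intros; apply H; lia). rewrite H by lia. lra. Qed.

Lemma sumn_nonneg n g : (forall i, (i < n)%nat -> 0 <= g i) -> 0 <= sumn n g.
Proof. induction n; simpl; intros H; [lra|]. pose proof (H n ltac:(lia)). pose proof (IHn ltac:(intros; apply H; lia)). lra. Qed.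

Lemma sumn_split p q g : sumn (p + q) g = sumn p g + sumn q (fun i => g (p + i)%nat).
Proof. induction q; simpl. rewrite Nat.add_0_r; lra. rewrite Nat.add_succ_r. simpl. rewrite IHq. lra. Qed.

Lemma sumn_exchange n m (F : nat -> nat -> R) :
  sumn n (fun i => sumn m (fun j => F i j)) = sumn m (fun j => sumn n (fun i => F i j)).
Proof. induction n; simpl. symmetry; apply sumn_zero; auto. rewrite IHn. rewrite <- sumn_plus. auto. Qed.

Lemma sum_f_R0_sumn g k : sum_f_R0 g k = sumn (S k) g.
Proof. induction k; simpl; [lra|]. rewrite IHk. simpl. auto. Qed.

Lemma abel n (W D : nat -> R) :
  sumn (S n) (fun j => W j * D j) =
  sumn (S n) W * D n - sumn n (fun j => sumn (S j) W * (D (S j) - D j)).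
Proof.
  induction n. simpl. lra.
  change (sumn (S (S n)) (fun j => W j * D j)) with (sumn (S n) (fun j => W j * D j) + W (S n) * D (S n)).
  rewrite IHn. change (sumn (S (S n)) W) with (sumn (S n) W + W (S n)).
  change (sumn (S n) (fun j => sumn (S j) W * (D (S j) - D j))) with
    (sumn n (fun j => sumn (S j) W * (D (S j) - D j)) + sumn (S n) W * (D (S n) - D n)).
  lra.
Qed.


Definition smono (s : nat -> R) := forall j, s j < s (S j).

Lemma smono_lt s : smono s -> forall i j, (i < j)%nat -> s i < s j.
Proof. intros H i j Hij. induction Hij. apply H. specialize (H m). lra. Qed.

Lemma smono_le s : smono s -> forall i j, (i <= j)%nat -> s i <= s j.
Proof. intros H i j Hij. destruct (Nat.eq_dec i j). subst; lra. left; apply smono_lt; auto; lia. Qed.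

Fixpoint DD (s : nat -> R) (r j : nat) (g : R -> R) : R :=
  match r with
  | O => g (s j)
  | S r' => (DD s r' (S j) g - DD s r' j g) / (s (j + S r')%nat - s j)
  end.

Lemma DD_ext s r : forall j g h, (forall i, (j <= i <= j + r)%nat -> g (s i) = h (s i)) -> DD s r j g = DD s r j h.
Proof.
  induction r; intros j g h H; simpl. apply H; lia.
  rewrite (IHr (S j) g h), (IHr j g h); auto; intros; apply H; lia.
Qed.

Lemma DD_lin s r : forall j g h u v, DD s r j (fun x => u * g x + v * h x) = u * DD s r j g + v * DD s r j h.
Proof.
  induction r; intros; simpl. auto.
  rewrite !IHr. unfold Rdiv. ring.
Qed.

Lemma DD_leib s (Hs : smono s) d : forall j h c,
  DD s (S d) j (fun x => (x - c) * h x) = (s j - c) * DD s (S d) j h + DD s d (S j) h.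
Proof.
  induction d; intros j h c.
  - simpl. replace (j + 1)%nat with (S j) by lia.
    assert (s (S j) - s j <> 0) by (specialize (Hs j); lra). field; auto.
  - change (DD s (S (S d)) j (fun x => (x - c) * h x)) with
      ((DD s (S d) (S j) (fun x => (x - c) * h x) - DD s (S d) j (fun x => (x - c) * h x)) / (s (j + S (S d))%nat - s j)).
    rewrite !IHd.
    change (DD s (S (S d)) j h) with ((DD s (S d) (S j) h - DD s (S d) j h) / (s (j + S (S d))%nat - s j)).
    change (DD s (S d) (S j) h) with ((DD s d (S (S j)) h - DD s d (S j) h) / (s (S j + S d)%nat - s (S j))).
    replace (S j + S d)%nat with (j + S (S d))%nat by lia.
    assert (s (j + S (S d))%nat - s (S j) <> 0) by (pose proof (smono_lt s Hs (S j) (j + S (S d)) ltac:(lia)); lra).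
    assert (s (j + S (S d))%nat - s j <> 0) by (pose proof (smono_lt s Hs j (j + S (S d)) ltac:(lia)); lra).
    field; auto.
Qed.

Inductive PolyL : nat -> (R -> R) -> R -> Prop :=
| PL_const c : PolyL 0 (fun _ => c) c
| PL_mul d h L c : PolyL d h L -> PolyL (S d) (fun x => (x - c) * h x) L
| PL_weak d h L : PolyL d h L -> PolyL (S d) h 0
| PL_lin d h1 h2 L1 L2 u v : PolyL d h1 L1 -> PolyL d h2 L2 ->
    PolyL d (fun x => u * h1 x + v * h2 x) (u * L1 + v * L2)
| PL_ext d h1 h2 L : PolyL d h1 L -> (forall x, h1 x = h2 x) -> PolyL d h2 L.

Lemma DD_poly s (Hs : smono s) d h L : PolyL d h L -> forall j, DD s d j h = L.
Proof.
  induction 1; intros j.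
  - reflexivity.
  - rewrite DD_leib by auto. simpl DD. rewrite !IHPolyL. unfold Rdiv. ring.
  - simpl. rewrite !IHPolyL. unfold Rdiv. ring.
  - rewrite DD_lin, IHPolyL1, IHPolyL2. auto.
  - rewrite <- (IHPolyL j). apply DD_ext. intros; symmetry; auto.
Qed.

Lemma PolyL_pow r : PolyL r (fun x => x ^ r) 1.
Proof.
  induction r. simpl. apply PL_const.
  apply PL_ext with (fun x => (x - 0) * x ^ r). apply PL_mul; auto.
  intros; simpl; ring.
Qed.


Lemma dconst_zero F K x l : (forall y, F y = K) -> derivable_pt_lim F x l -> l = 0.
Proof.
  intros HF Hl. apply (uniqueness_limite F x); auto.
  intros eps Heps. exists (mkposreal 1 Rlt_0_1). intros h Hh _.
  rewrite !HF. replace ((K - K) / h - 0) with 0 by (field; auto). rewrite Rabs_R0; auto.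
Qed.

Lemma dlim_ext F G x l : (forall y, F y = G y) -> derivable_pt_lim F x l -> derivable_pt_lim G x l.
Proof. intros HF H eps He. destruct (H eps He) as [d Hd]. exists d. intros. rewrite <- !HF. auto. Qed.

Lemma dmul f g x lf lg : derivable_pt_lim f x lf -> derivable_pt_lim g x lg ->
  derivable_pt_lim (fun y => f y * g y) x (lf * g x + f x * lg).
Proof. intros. apply (derivable_pt_lim_mult f g); auto. Qed.

Lemma dlin f g u v x lf lg : derivable_pt_lim f x lf -> derivable_pt_lim g x lg ->
  derivable_pt_lim (fun y => u * f y + v * g y) x (u * lf + v * lg).
Proof.
  intros. apply (derivable_pt_lim_plus (fun y => u * f y) (fun y => v * g y)).
  apply (derivable_pt_lim_scal f); auto. apply (derivable_pt_lim_scal g); auto.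
Qed.

Lemma dlinc c x : derivable_pt_lim (fun y => y - c) x 1.
Proof. replace 1 with (1 - 0) by ring. apply (derivable_pt_lim_minus id (fct_cte c)).
  apply derivable_pt_lim_id. apply derivable_pt_lim_const. Qed.

Lemma poly_chain d h L : PolyL d h L -> exists H : nat -> R -> R,
  (forall x, H 0%nat x = h x) /\ (forall i x, derivable_pt_lim (H i) x (H (S i) x)) /\
  (forall x, H d x = INR (fact d) * L).
Proof.
  induction 1.
  - exists (fun i x => match i with O => c | S _ => 0 end). split; [|split].
    + auto.
    + intros i x. destruct i; apply derivable_pt_lim_const.
    + intros; simpl; ring.
  - destruct IHPolyL as [Q [Q0 [Q1 Q2]]].
    exists (fun i x => (x - c) * Q i x + INR i * match i with O => 0 | S i' => Q i' x end).
    split; [|split].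
    + intros; simpl. rewrite Q0; ring.
    + intros i x. destruct i.
      * apply dlim_ext with (fun y => (y - c) * Q 0%nat y).
        { intros; simpl; ring. }
        replace ((x - c) * Q 1%nat x + INR 1 * Q 0%nat x) with (1 * Q 0%nat x + (x - c) * Q 1%nat x) by (simpl; ring).
        apply (dmul (fun y => y - c) (Q 0%nat)); auto. apply dlinc.
      * replace ((x - c) * Q (S (S i)) x + INR (S (S i)) * Q (S i) x) with
          ((1 * Q (S i) x + (x - c) * Q (S (S i)) x) + INR (S i) * Q (S i) x)
          by (rewrite !S_INR; ring).
        apply (derivable_pt_lim_plus (fun y => (y - c) * Q (S i) y) (fun y => INR (S i) * Q i y)).
        apply (dmul (fun y => y - c) (Q (S i))); auto. apply dlinc.
        apply (derivable_pt_lim_scal (Q i)); auto.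
    + intros x. assert (Q3 : Q (S d) x = 0) by (eapply dconst_zero; [exact Q2| apply Q1]).
      rewrite Q3, Q2. change (fact (S d)) with (S d * fact d)%nat. rewrite mult_INR. ring.
  - destruct IHPolyL as [Q [Q0 [Q1 Q2]]]. exists Q. split; [|split]; auto.
    intros x. rewrite Rmult_0_r. eapply dconst_zero; [exact Q2| apply Q1].
  - destruct IHPolyL1 as [Q [Q0 [Q1 Q2]]]. destruct IHPolyL2 as [G [G0 [G1 G2]]].
    exists (fun i x => u * Q i x + v * G i x). split; [|split].
    + intros; rewrite Q0, G0; auto.
    + intros i x. apply (dlin (Q i) (G i)); auto.
    + intros. rewrite Q2, G2. ring.
  - destruct IHPolyL as [Q [Q0' [Q1 Q2]]]. exists Q. split; [|split]; auto.
    intros; rewrite Q0'; auto.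
Qed.


Lemma lim1_iff f D l x0 : limit1_in f D l x0 <->
  forall eps, eps > 0 -> exists alp, alp > 0 /\ forall y, D y -> Rabs (y - x0) < alp -> Rabs (f y - l) < eps.
Proof.
  unfold limit1_in, limit_in; simpl; unfold Rdist. split; intros H eps He;
  destruct (H eps He) as [alp [Ha H']]; exists alp; split; auto; intros;
  apply H'; try tauto; auto.
Qed.

Lemma dpl_deriv_on a b G G' : (forall x, derivable_pt_lim G x (G' x)) -> deriv_on a b G G'.
Proof.
  intros H x Hx. apply lim1_iff. intros eps He. destruct (H x eps He) as [d Hd].
  exists d. split; [apply cond_pos|]. intros y [Hy Hyx] Hyd.
  assert (y - x <> 0) by lra. specialize (Hd (y - x) H0 Hyd).
  replace (x + (y - x)) with y in Hd by ring. auto.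
Qed.

Lemma deriv_on_minus a b g1 g1' g2 g2' : deriv_on a b g1 g1' -> deriv_on a b g2 g2' ->
  deriv_on a b (fun y => g1 y - g2 y) (fun y => g1' y - g2' y).
Proof.
  intros H1 H2 x Hx. specialize (limit_minus _ _ _ _ _ _ (H1 x Hx) (H2 x Hx)). intros H.
  rewrite lim1_iff in *. intros eps He. destruct (H eps He) as [alp [Ha Hb]]. exists alp; split; auto.
  intros y Hy Hyx. specialize (Hb y Hy Hyx).
  replace ((g1 y - g2 y - (g1 x - g2 x)) / (y - x)) with ((g1 y - g1 x) / (y - x) - (g2 y - g2 x) / (y - x))
    by (unfold Rdiv; ring). auto.
Qed.

Lemma deriv_on_cont a b g g' x : deriv_on a b g g' -> a <= x <= b ->
  forall eps, eps > 0 -> exists del, del > 0 /\ forall y, a <= y <= b -> Rabs (y - x) < del -> Rabs (g y - g x) < eps.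
Proof.
  intros H Hx eps He. pose proof (H x Hx) as Hl. rewrite lim1_iff in Hl.
  destruct (Hl 1 Rlt_0_1) as [alp [Ha Hb]].
  set (M := Rabs (g' x) + 1).
  assert (HM : M > 0) by (unfold M; pose proof (Rabs_pos (g' x)); lra).
  exists (Rmin alp (eps / M)). split. apply Rmin_pos; auto. apply Rdiv_lt_0_compat; auto.
  intros y Hy Hyx. destruct (Req_dec y x) as [->|Hne].
  - replace (g x - g x) with 0 by ring. rewrite Rabs_R0; auto.
  - assert (Hyx1 : Rabs (y - x) < alp) by (pose proof (Rmin_l alp (eps/M)); lra).
    specialize (Hb y (conj Hy Hne) Hyx1).
    assert (Hq : Rabs ((g y - g x) / (y - x)) < M).
    { unfold M. pose proof (Rabs_triang_inv ((g y - g x) / (y - x)) (g' x)). lra. }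
    replace (g y - g x) with ((g y - g x) / (y - x) * (y - x)) by (field; lra).
    rewrite Rabs_mult.
    assert (Hyx2 : Rabs (y - x) < eps / M) by (pose proof (Rmin_r alp (eps/M)); lra).
    assert (0 < Rabs (y - x)) by (apply Rabs_pos_lt; lra).
    apply Rle_lt_trans with (M * Rabs (y - x)).
    apply Rmult_le_compat_r; lra.
    replace eps with (M * (eps / M)) by (field; lra).
    apply Rmult_lt_compat_l; lra.
Qed.

Definition cl (a b y : R) := Rmax a (Rmin b y).

Lemma cl_in a b y : a <= b -> a <= cl a b y <= b.
Proof. intros. unfold cl, Rmax, Rmin. repeat destruct Rle_dec; lra. Qed.

Lemma cl_id a b y : a <= y <= b -> cl a b y = y.
Proof. intros. unfold cl, Rmax, Rmin. repeat destruct Rle_dec; lra. Qed.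

Lemma cl_lip a b y z : a <= b -> Rabs (cl a b y - cl a b z) <= Rabs (y - z).
Proof. intros. unfold cl, Rmax, Rmin. repeat destruct Rle_dec; unfold Rabs; repeat destruct Rcase_abs; lra. Qed.

Lemma my_rolle a b g g' u v : a <= u -> u < v -> v <= b -> deriv_on a b g g' -> g u = g v ->
  exists z, u < z < v /\ g' z = 0.
Proof.
  intros Hau Huv Hvb Hd Heq.
  set (G := fun y => g (cl a b y)).
  assert (Hder : forall x, u < x < v -> derivable_pt_lim G x (g' x)).
  { intros x Hx eps He. pose proof (Hd x ltac:(lra)) as Hl. rewrite lim1_iff in Hl.
    destruct (Hl eps He) as [alp [Ha Hb]].
    assert (Hp : 0 < Rmin alp (Rmin (x - a) (b - x))) by (repeat apply Rmin_pos; lra).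
    exists (mkposreal _ Hp). intros h Hh0 Hh. simpl in Hh.
    pose proof (Rmin_l alp (Rmin (x - a) (b - x))). pose proof (Rmin_r alp (Rmin (x - a) (b - x))).
    pose proof (Rmin_l (x - a) (b - x)). pose proof (Rmin_r (x - a) (b - x)).
    assert (Hxh : a <= x + h <= b) by (unfold Rabs in Hh; destruct Rcase_abs in Hh; lra).
    unfold G. rewrite (cl_id a b (x + h)) by auto. rewrite (cl_id a b x) by lra.
    assert (Hne : x + h <> x) by (intro; apply Hh0; lra). specialize (Hb (x + h) (conj Hxh Hne)). replace (x + h - x) with h in Hb by ring.
    apply Hb. lra. }
  assert (pr : forall x, u < x < v -> derivable_pt G x).
  { intros x Hx. exists (g' x). apply Hder; auto. }
  assert (Hc : forall x, u <= x <= v -> continuity_pt G x).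
  { intros x Hx. unfold continuity_pt, continue_in. apply lim1_iff. intros eps He.
    destruct (deriv_on_cont a b g g' x Hd ltac:(lra) eps He) as [del [Hdel Hdd]].
    exists del. split; auto. intros y _ Hy. unfold G. rewrite (cl_id a b x) by lra.
    apply Hdd. apply cl_in; lra.
    assert (Hl2 := cl_lip a b y x ltac:(lra)); rewrite (cl_id a b x) in Hl2 by lra; lra. }
  assert (HG : G u = G v) by (unfold G; rewrite !cl_id by lra; auto).
  destruct (Rolle G u v pr Hc Huv HG) as [z [P Hz]].
  exists z. split; auto. rewrite <- Hz. symmetry. apply derive_pt_eq_0. apply Hder; auto.
Qed.


Lemma fchoice (P : nat -> R -> Prop) n : (forall i, (i < n)%nat -> exists z, P i z) ->
  exists g : nat -> R, forall i, (i < n)%nat -> P i (g i).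
Proof.
  induction n; intros H. exists (fun _ => 0). intros; lia.
  destruct IHn as [g Hg]. intros; apply H; lia.
  destruct (H n ltac:(lia)) as [z Hz].
  exists (fun i => if Nat.eq_dec i n then z else g i). intros i Hi.
  destruct (Nat.eq_dec i n). subst; auto. apply Hg; lia.
Qed.

Lemma gen_rolle a b n : forall (G : nat -> R -> R) (z : nat -> R),
  (forall i, (i < n)%nat -> deriv_on a b (G i) (G (S i))) ->
  (forall i, (i < n)%nat -> z i < z (S i)) ->
  (forall i, (i <= n)%nat -> a <= z i <= b) ->
  (forall i, (i <= n)%nat -> G 0%nat (z i) = 0) ->
  exists xi, a <= xi <= b /\ G n xi = 0.
Proof.
  induction n; intros G z Hd Hz Hab H0.
  - exists (z 0%nat). split; auto.
  - destruct (fchoice (fun i w => z i < w < z (S i) /\ G 1%nat w = 0) (S n)) as [g Hg].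
    { intros i Hi. destruct (my_rolle a b (G 0%nat) (G 1%nat) (z i) (z (S i))) as [w [Hw1 Hw2]].
      apply Hab; lia. apply Hz; lia. apply Hab; lia. apply Hd; lia.
      rewrite !H0 by lia. auto. exists w; auto. }
    destruct (IHn (fun i => G (S i)) g) as [xi [Hxi1 Hxi2]].
    + intros; apply Hd; lia.
    + intros i Hi. destruct (Hg i ltac:(lia)) as [[A1 A2] _]. destruct (Hg (S i) ltac:(lia)) as [[B1 B2] _]. lra.
    + intros i Hi. destruct (Hg i ltac:(lia)) as [[A1 A2] _].
      pose proof (Hab i ltac:(lia)). pose proof (Hab (S i) ltac:(lia)). lra.
    + intros i Hi. apply Hg; lia.
    + exists xi; auto.
Qed.

Fixpoint nev (s : nat -> R) (phi : R -> R) (l j : nat) : R -> R :=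
  match l with
  | O => fun _ => phi (s j)
  | S l' => fun x => ((x - s j) * nev s phi l' (S j) x - (x - s (j + S l')%nat) * nev s phi l' j x)
                      / (s (j + S l')%nat - s j)
  end.

Lemma nev_interp s phi (Hs : smono s) l : forall j i, (i <= l)%nat -> nev s phi l j (s (j + i)%nat) = phi (s (j + i)%nat).
Proof.
  induction l; intros j i Hi.
  - simpl. replace (j + i)%nat with j by lia. auto.
  - assert (Hd : s (j + S l)%nat - s j <> 0) by (pose proof (smono_lt s Hs j (j + S l) ltac:(lia)); lra).
    simpl nev.
    destruct (Nat.eq_dec i 0) as [->|Hi0].
    + replace (j + 0)%nat with j by lia. pose proof (IHl j 0%nat ltac:(lia)) as E.
      replace (j + 0)%nat with j in E by lia. rewrite E. field; auto.
    + destruct (Nat.eq_dec i (S l)) as [->|HiS].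
      * pose proof (IHl (S j) l ltac:(lia)) as E. replace (S j + l)%nat with (j + S l)%nat in E by lia.
        rewrite E. field; auto.
      * pose proof (IHl (S j) (i - 1)%nat ltac:(lia)) as E1. replace (S j + (i - 1))%nat with (j + i)%nat in E1 by lia.
        pose proof (IHl j i ltac:(lia)) as E2. rewrite E1, E2. field; auto.
Qed.

Lemma nev_poly s phi l : forall j, exists L, PolyL l (nev s phi l j) L.
Proof.
  induction l; intros j.
  - exists (phi (s j)). simpl. apply PL_const.
  - destruct (IHl (S j)) as [L1 H1]. destruct (IHl j) as [L2 H2].
    set (d := s (j + S l)%nat - s j).
    eexists. eapply PL_ext. apply (PL_lin (S l) _ _ L1 L2 (1/d) (-(1/d))
      (PL_mul l _ _ (s j) H1) (PL_mul l _ _ (s (j + S l)%nat) H2)).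
    intros x. simpl. fold d. unfold Rdiv. ring.
Qed.

Lemma DD_nonneg a b s (Hs : smono s) r j (F : nat -> R -> R) :
  (forall i, (i < r)%nat -> deriv_on a b (F i) (F (S i))) ->
  (forall x, a <= x <= b -> 0 <= F r x) ->
  (forall i, (i <= r)%nat -> a <= s (j + i)%nat <= b) ->
  0 <= DD s r j (F 0%nat).
Proof.
  intros Hd Hpos Hab.
  destruct (nev_poly s (F 0%nat) r j) as [L HL].
  destruct (poly_chain _ _ _ HL) as [H [H0 [H1 H2]]].
  assert (E : DD s r j (F 0%nat) = L).
  { rewrite <- (DD_poly s Hs r _ L HL j). apply DD_ext. intros i Hi.
    replace i with (j + (i - j))%nat by lia. rewrite nev_interp; auto; lia. }
  rewrite E.
  destruct (gen_rolle a b r (fun i x => F i x - H i x) (fun i => s (j + i)%nat)) as [xi [Hxi1 Hxi2]].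
  - intros i Hi. apply deriv_on_minus; auto. apply dpl_deriv_on; auto.
  - intros i Hi. replace (j + S i)%nat with (S (j + i)) by lia. apply Hs.
  - auto.
  - intros i Hi. simpl. rewrite H0. rewrite nev_interp; auto. ring.
  - simpl in Hxi2. rewrite H2 in Hxi2. pose proof (Hpos xi Hxi1).
    pose proof (lt_0_INR (fact r) (lt_O_fact r)). nra.
Qed.


Definition sgn (n : nat) : R := (-1) ^ n.

Lemma sgn_S n : sgn (S n) = - sgn n.
Proof. unfold sgn; simpl; ring. Qed.

Lemma sgn_sq n : sgn n * sgn n = 1.
Proof. unfold sgn. rewrite <- Rpow_mult_distr. replace (-1 * -1) with 1 by ring. apply pow1. Qed.

Definition SC (q e n : nat) (v : nat -> R) :=
  exists tau : nat -> nat,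
    (forall i j, (i <= j)%nat -> (j < n)%nat -> (tau i <= tau j)%nat) /\
    (forall j, (j < n)%nat -> (tau j <= q)%nat) /\
    (forall j, (j < n)%nat -> 0 <= sgn (e + tau j) * v j).

Lemma sumn_range v i j : (i <= j)%nat ->
  sumn (S j) v = sumn (S i) v + sumn (j - i) (fun t => v (S i + t)%nat).
Proof. intros. replace (S j) with (S i + (j - i))%nat at 1 by lia. apply sumn_split. Qed.

Lemma SC_chain q e n v : SC (S q) e n v -> sumn n v = 0 ->
  SC q e n (fun j => sumn (S j) v).
Proof.
  intros [tau [Hm [Hq Hs]]] Hz.
  set (P := fun j => sumn (S j) v).
  assert (F1 : forall j, (j < n)%nat -> tau j = 0%nat -> 0 <= sgn e * P j).
  { intros j Hj Ht. unfold P. rewrite <- sumn_scal. apply sumn_nonneg. intros t Ht'.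
    assert (tau t = 0%nat) by (pose proof (Hm t j ltac:(lia) Hj); lia).
    pose proof (Hs t ltac:(lia)). rewrite H, Nat.add_0_r in H0. auto. }
  assert (F2 : forall j, (j < n)%nat -> tau j = S q -> sgn (e + S q) * P j <= 0).
  { intros j Hj Ht. unfold P.
    assert (E : sumn n v = sumn (S j) v + sumn (n - S j) (fun t => v (S j + t)%nat)).
    { replace n with (S j + (n - S j))%nat at 1 by lia. apply sumn_split. }
    assert (HN : 0 <= sumn (n - S j) (fun t => sgn (e + S q) * v (S j + t)%nat)).
    { apply sumn_nonneg. intros t Ht'.
      assert (tau (S j + t)%nat = S q) by (pose proof (Hm j (S j + t)%nat ltac:(lia) ltac:(lia)); pose proof (Hq (S j + t)%nat ltac:(lia)); lia).
      pose proof (Hs (S j + t)%nat ltac:(lia)). rewrite H in H0. auto. }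
    rewrite sumn_scal in HN. assert (sumn (S j) v = - sumn (n - S j) (fun t => v (S j + t)%nat)) by lra.
    rewrite H. lra. }
  assert (F3 : forall i j, (i <= j)%nat -> (j < n)%nat -> tau i = tau j ->
            sgn (e + tau j) * P i <= sgn (e + tau j) * P j).
  { intros i j Hij Hj Ht. unfold P. rewrite (sumn_range v i j Hij).
    assert (HN : 0 <= sumn (j - i) (fun t => sgn (e + tau j) * v (S i + t)%nat)).
    { apply sumn_nonneg. intros t Ht'.
      assert (tau (S i + t)%nat = tau j) by (pose proof (Hm i (S i + t)%nat ltac:(lia) ltac:(lia)); pose proof (Hm (S i + t)%nat j ltac:(lia) Hj); lia).
      pose proof (Hs (S i + t)%nat ltac:(lia)). rewrite H in H0. auto. }
    rewrite sumn_scal in HN. rewrite Rmult_plus_distr_l. lra. }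
  exists (fun j => if Rle_dec 0 (sgn (e + tau j) * P j) then Nat.min (tau j) q else (tau j - 1)%nat).
  split; [|split].
  - intros i j Hij Hj.
    pose proof (Hq j Hj). pose proof (Hm i j Hij Hj).
    destruct (Nat.eq_dec (tau i) (tau j)) as [Heq|Hne].
    + destruct (Rle_dec 0 (sgn (e + tau i) * P i)) as [Hi|Hi];
      destruct (Rle_dec 0 (sgn (e + tau j) * P j)) as [Hj'|Hj']; try lia.
      exfalso. pose proof (F3 i j Hij Hj Heq). rewrite Heq in Hi. lra.
    + destruct (Rle_dec 0 (sgn (e + tau i) * P i)); destruct (Rle_dec 0 (sgn (e + tau j) * P j)); lia.
  - intros j Hj. pose proof (Hq j Hj).
    destruct (Rle_dec 0 (sgn (e + tau j) * P j)) as [H1|H1]; [lia|].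
    destruct (Nat.eq_dec (tau j) 0) as [H0|H0].
    + exfalso. pose proof (F1 j Hj H0). rewrite H0, Nat.add_0_r in H1. fold P in H1. lra.
    + lia.
  - intros j Hj. pose proof (Hq j Hj). fold P.
    destruct (Rle_dec 0 (sgn (e + tau j) * P j)) as [H1|H1].
    + destruct (Nat.eq_dec (tau j) (S q)) as [E|E].
      * replace (Nat.min (tau j) q) with q by lia. pose proof (F2 j Hj E).
        rewrite Nat.add_succ_r, sgn_S in H0. lra.
      * replace (Nat.min (tau j) q) with (tau j) by lia. auto.
    + destruct (Nat.eq_dec (tau j) 0) as [H0|H0].
      * exfalso. pose proof (F1 j Hj H0). rewrite H0, Nat.add_0_r in H1. lra.
      * replace (e + tau j)%nat with (S (e + (tau j - 1))) in H1 by lia. rewrite sgn_S in H1. lra.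
Qed.

Lemma SC_flip q e n v (d : nat -> R) : SC q e n v -> (forall j, (j < n)%nat -> 0 < d j) ->
  SC q (S e) n (fun j => d j * - v j).
Proof.
  intros [tau [Hm [Hq Hs]]] Hd. exists tau. split; [|split]; auto.
  intros j Hj. simpl. rewrite sgn_S. pose proof (Hs j Hj). pose proof (Hd j Hj).
  replace (- sgn (e + tau j) * (d j * - v j)) with (d j * (sgn (e + tau j) * v j)) by ring.
  apply Rmult_le_pos; lra.
Qed.

Lemma SC_len q e n n' v : (n' <= n)%nat -> SC q e n v -> SC q e n' v.
Proof. intros Hn [tau [Hm [Hq Hs]]]. exists tau. split; [|split]; intros; auto; [apply Hm|apply Hq|apply Hs]; lia. Qed.

Lemma SC_zero e n v : Nat.even e = true -> SC 0 e n v -> forall j, (j < n)%nat -> 0 <= v j.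
Proof.
  intros He [tau [Hm [Hq Hs]]] j Hj. pose proof (Hq j Hj). pose proof (Hs j Hj).
  replace (tau j) with 0%nat in H0 by lia. rewrite Nat.add_0_r in H0.
  apply Nat.even_spec in He. destruct He as [h ->]. unfold sgn in H0. rewrite pow_1_even in H0. lra.
Qed.


Fixpoint W (s : nat -> R) (c : nat -> R) (r : nat) : nat -> R :=
  match r with
  | O => c
  | S r' => fun j => (s (j + S r')%nat - s j) * - sumn (S j) (W s c r')
  end.

Lemma sumn_opp n g : - sumn n g = sumn n (fun j => - g j).
Proof. induction n; simpl; [ring|]. rewrite <- IHn. ring. Qed.

Lemma W_ident s (Hs : smono s) c m r : (forall r', (r' < r)%nat -> sumn (m - r') (W s c r') = 0) ->
  forall g, sumn m (fun j => c j * g (s j)) = sumn (m - r) (fun j => W s c r j * DD s r j g).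
Proof.
  induction r; intros Hz g.
  - rewrite Nat.sub_0_r. apply sumn_ext. intros; simpl; auto.
  - rewrite IHr by (intros; apply Hz; lia).
    destruct (m - r)%nat eqn:Em.
    + replace (m - S r)%nat with 0%nat by lia. simpl. auto.
    + rewrite abel. pose proof (Hz r ltac:(lia)) as Hz0. rewrite Em in Hz0. rewrite Hz0.
      replace (m - S r)%nat with n by lia.
      rewrite Rmult_0_l, Rminus_0_l, sumn_opp. apply sumn_ext. intros j Hj.
      assert (s (j + S r)%nat - s j <> 0) by (pose proof (smono_lt s Hs j (j + S r) ltac:(lia)); lra).
      simpl. field; auto.
Qed.

Lemma W_zero s (Hs : smono s) c m k : (forall p, (p < k)%nat -> sumn m (fun j => c j * s j ^ p) = 0) ->
  forall r, (r < k)%nat -> sumn (m - r) (W s c r) = 0.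
Proof.
  intros Hp.
  assert (forall r, (r < k)%nat -> forall r', (r' <= r)%nat -> sumn (m - r') (W s c r') = 0).
  { induction r; intros Hr r' Hr'.
    - replace r' with 0%nat by lia. rewrite Nat.sub_0_r. specialize (Hp 0%nat Hr).
      rewrite <- Hp. apply sumn_ext. intros; simpl; ring.
    - destruct (Nat.eq_dec r' (S r)) as [->|Hne]; [|apply IHr; lia].
      pose proof (W_ident s Hs c m (S r) ltac:(intros; apply IHr; lia) (fun x => x ^ S r)) as E.
      cbv beta in E. rewrite Hp in E by auto.
      rewrite E. apply sumn_ext. intros j Hj. rewrite (DD_poly s Hs _ _ _ (PolyL_pow (S r))). ring. }
  intros r Hr. apply (H r Hr); lia.
Qed.

Lemma core a b s (Hs : smono s) c m k f :
  (1 <= k)%nat ->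
  (forall j, (j < m)%nat -> a <= s j <= b) ->
  (forall p, (p < k)%nat -> sumn m (fun j => c j * s j ^ p) = 0) ->
  SC (k - 1) (k - 1) (m - 1) (W s c 1) ->
  k_diff_nonneg_kth k a b f ->
  0 <= sumn m (fun j => c j * f (s j)).
Proof.
  intros Hk Hab Hp HSC [D [HD0 [HD1 HD2]]].
  assert (HT : forall t, (t <= k - 1)%nat -> SC (k - 1 - t) (k - 1 + t) (m - S t) (W s c (S t))).
  { induction t; intros Ht.
    - rewrite Nat.sub_0_r, Nat.add_0_r. auto.
    - pose proof (IHt ltac:(lia)) as H.
      replace (k - 1 - t)%nat with (S (k - 1 - S t)) in H by lia.
      apply SC_chain in H; [|apply (W_zero s Hs c m k); auto; lia].
      apply (SC_len _ _ _ (m - S (S t))) in H; [|lia].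
      apply (SC_flip _ _ _ _ (fun j => s (j + S (S t))%nat - s j)) in H.
      + replace (k - 1 + S t)%nat with (S (k - 1 + t)) by lia. exact H.
      + intros j Hj. pose proof (smono_lt s Hs j (j + S (S t)) ltac:(lia)). lra. }
  pose proof (HT (k - 1)%nat ltac:(lia)) as H. replace (S (k - 1)) with k in H by lia.
  replace (k - 1 - (k - 1))%nat with 0%nat in H by lia.
  assert (Hpos : forall j, (j < m - k)%nat -> 0 <= W s c k j).
  { apply (SC_zero (k - 1 + (k - 1))); auto. apply Nat.even_spec. exists (k - 1)%nat. lia. }
  rewrite (W_ident s Hs c m k) by (intros; apply (W_zero s Hs c m k); auto).
  apply sumn_nonneg. intros j Hj. apply Rmult_le_pos; auto.
  rewrite (DD_ext s k j f (D 0%nat)).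
  - apply (DD_nonneg a b s Hs k j D); auto. intros; apply Hab; lia.
  - intros i Hi. symmetry; apply HD0. apply Hab; lia.
Qed.


Lemma first_ge (s : nat -> R) x p : x <= s p -> exists q, (q <= p)%nat /\ x <= s q /\ (q = 0%nat \/ s (pred q) < x).
Proof.
  induction p; intros H. exists 0%nat; auto.
  destruct (Rlt_dec (s p) x). exists (S p). simpl; auto.
  destruct IHp as [q [H1 [H2 H3]]]. lra. exists q; split; auto; lia.
Qed.

Lemma sort_vals (v : nat -> R) U n : (forall i, (i < n)%nat -> v i < U) ->
  exists m (s : nat -> R), smono s /\
    (forall j, (j < m)%nat -> exists i, (i < n)%nat /\ s j = v i) /\
    (forall i, (i < n)%nat -> exists j, (j < m)%nat /\ s j = v i) /\
    (forall j, (m <= j)%nat -> U < s j).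
Proof.
  induction n; intros HU.
  - exists 0%nat, (fun j => U + 1 + INR j). split; [|split; [|split]].
    + intros j. rewrite S_INR. lra.
    + intros; lia.
    + intros; lia.
    + intros j _. pose proof (pos_INR j). lra.
  - destruct IHn as [m [s [Hs [H1 [H2 H3]]]]]. intros; apply HU; lia.
    set (x := v n). assert (Hx : x < U) by (apply HU; lia).
    destruct (classic (exists j, (j < m)%nat /\ s j = x)) as [[j0 [Hj0 Hj0']]|Hnot].
    + exists m, s. split; [auto|split; [|split]].
      * intros j Hj. destruct (H1 j Hj) as [i [Hi Hi']]. exists i; split; auto.
      * intros i Hi. destruct (Nat.eq_dec i n) as [->|Hne]. exists j0; auto. apply H2; lia.
      * auto.
    + assert (Hneq : forall j, s j <> x).
      { intros j Hj. destruct (Nat.lt_ge_cases j m). apply Hnot; eauto. pose proof (H3 j H). lra. }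
      set (s' := fun j => if Rlt_dec (s j) x then s j else
                   match j with O => x | S j' => if Rlt_dec (s j') x then x else s j' end).
      exists (S m), s'. split; [|split; [|split]].
      * intros j. unfold s'. pose proof (Hs j).
        destruct (Rlt_dec (s j) x); destruct (Rlt_dec (s (S j)) x); try lra.
        destruct (Rlt_dec (s j) x); try lra.
        assert (x < s j) by (pose proof (Hneq j); lra).
        destruct j. lra. destruct (Rlt_dec (s j) x); pose proof (Hs j); lra.
      * intros j Hj. unfold s'. destruct (Rlt_dec (s j) x).
        { destruct (Nat.lt_ge_cases j m) as [Hl|Hl]. destruct (H1 j Hl) as [i [Hi Hi']]. exists i; split; auto.
          pose proof (H3 j Hl). lra. }
        destruct j. exists n; auto.
        destruct (Rlt_dec (s j) x). exists n; auto.
        destruct (H1 j ltac:(lia)) as [i [Hi Hi']]. exists i; split; auto.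
      * intros i Hi. destruct (Nat.eq_dec i n) as [->|Hne].
        { destruct (first_ge s x m) as [q [Hq1 [Hq2 Hq3]]]. pose proof (H3 m (le_n m)). lra.
          exists q. split. lia. unfold s'. destruct (Rlt_dec (s q) x). lra.
          destruct q. auto. destruct Hq3 as [Hq3|Hq3]. lia. simpl in Hq3.
          destruct (Rlt_dec (s q) x). auto. lra. }
        destruct (H2 i ltac:(lia)) as [j [Hj Hj']].
        destruct (Rlt_dec (s j) x).
        { exists j. split. lia. unfold s'. destruct (Rlt_dec (s j) x); [auto|lra]. }
        { exists (S j). split. lia. unfold s'. pose proof (Hs j).
          destruct (Rlt_dec (s (S j)) x). lra. destruct (Rlt_dec (s j) x). lra. auto. }
      * intros j Hj. unfold s'. pose proof (H3 j ltac:(lia)).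
        destruct (Rlt_dec (s j) x). lra. destruct j. lia.
        pose proof (H3 j ltac:(lia)). destruct (Rlt_dec (s j) x). lra. auto.
Qed.

Definition ind (x y : R) : R := if Req_EM_T x y then 1 else 0.

Lemma ind_sum1 s (Hs : smono s) m x : (exists j, (j < m)%nat /\ s j = x) ->
  sumn m (fun j => ind x (s j)) = 1.
Proof.
  induction m; intros [j0 [Hj0 E]]. lia.
  simpl. destruct (Nat.eq_dec j0 m) as [->|Hne].
  - rewrite sumn_zero. unfold ind. destruct Req_EM_T; [lra|congruence].
    intros i Hi. unfold ind. destruct Req_EM_T; auto. pose proof (smono_lt s Hs i m Hi). subst. lra.
  - rewrite IHm by (exists j0; split; auto; lia). unfold ind. destruct Req_EM_T; [|lra].
    pose proof (smono_lt s Hs j0 m ltac:(lia)). subst. lra.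
Qed.

Lemma regroup s (Hs : smono s) m (u : nat -> R) n' :
  (forall i, (i < n')%nat -> exists j, (j < m)%nat /\ s j = u i) ->
  forall g, sumn n' (fun i => g (u i)) = sumn m (fun j => sumn n' (fun i => ind (u i) (s j)) * g (s j)).
Proof.
  intros H g.
  transitivity (sumn n' (fun i => sumn m (fun j => ind (u i) (s j) * g (s j)))).
  - apply sumn_ext. intros i Hi.
    transitivity (sumn m (fun j => ind (u i) (s j)) * g (u i)).
    rewrite ind_sum1; auto. ring.
    rewrite Rmult_comm, <- sumn_scal. apply sumn_ext. intros j Hj. unfold ind. destruct Req_EM_T as [e|e]. rewrite e; ring. ring.
  - rewrite sumn_exchange. apply sumn_ext. intros j Hj. rewrite Rmult_comm, <- sumn_scal. apply sumn_ext. intros; ring.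
Qed.


Lemma par_eq x y z : (x + y = 2 * z)%nat -> Nat.even x = Nat.even y.
Proof. intros H. pose proof (Nat.even_add x y) as E. rewrite H, Nat.even_even in E.
  destruct (Nat.even x), (Nat.even y); simpl in *; congruence. Qed.

Lemma par_ne x y z : (x + y = 2 * z + 1)%nat -> Nat.even x = negb (Nat.even y).
Proof. intros H. pose proof (Nat.even_add x y) as E. rewrite H, Nat.even_odd in E.
  destruct (Nat.even x), (Nat.even y); simpl in *; congruence. Qed.

Lemma sgn_even n : Nat.even n = true -> sgn n = 1.
Proof. intros H. apply Nat.even_spec in H. destruct H as [h ->]. unfold sgn. apply pow_1_even. Qed.

Lemma sgn_odd n : Nat.even n = false -> sgn n = -1.
Proof. intros H. destruct (Nat.Even_or_Odd n) as [[h ->]|[h ->]].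
  rewrite Nat.even_even in H; discriminate.
  replace (2 * h + 1)%nat with (S (2 * h)) by lia. rewrite sgn_S. unfold sgn. rewrite pow_1_even. ring. Qed.

Lemma SC_N (A B : R -> nat) k : (1 <= k)%nat ->
  (forall t, (A t <= S k)%nat) -> (forall t, (B t <= S k)%nat) ->
  (forall t1 t2, t1 <= t2 -> (A t2 <= A t1)%nat /\ (B t2 <= B t1)%nat) ->
  (forall t, A t = 0%nat -> B t = 0%nat) ->
  (forall t, Nat.even k = true -> ~ (A t = S k /\ B t = k)) ->
  (forall t, Nat.even k = false -> ~ (A t = k /\ B t = S k)) ->
  exists T : R -> nat, (forall t1 t2, t1 <= t2 -> (T t1 <= T t2)%nat) /\ (forall t, (T t <= k - 1)%nat) /\
    (forall t, 0 <= sgn (k - 1 + T t) * (INR (A t) - INR (B t))).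
Proof.
  intros Hk HA HB Hmono Htop Hbe Hbo.
  set (lam := fun t => Nat.min (A t) (B t)).
  set (mt := fun t => if Nat.even (lam t) then Nat.ltb (B t) (A t) else Nat.ltb (A t) (B t)).
  exists (fun t => Nat.min (k - 1) (if mt t then k - lam t - 1 else k - lam t)%nat).
  split; [|split].
  - intros t1 t2 Ht. destruct (Hmono t1 t2 Ht) as [Ha Hb].
    assert (Hl : (lam t2 <= lam t1)%nat) by (unfold lam; lia).
    destruct (Nat.eq_dec (lam t1) (lam t2)) as [E|E].
    + destruct (mt t1) eqn:M1; destruct (mt t2) eqn:M2; try lia.
      exfalso. unfold mt in M1, M2. rewrite E in M1.
      destruct (Nat.even (lam t2)).
      * apply Nat.ltb_lt in M2. apply Nat.ltb_ge in M1. unfold lam in E. lia.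
      * apply Nat.ltb_lt in M2. apply Nat.ltb_ge in M1. unfold lam in E. lia.
    + destruct (mt t1); destruct (mt t2); lia.
  - intros; lia.
  - intros t. pose proof (HA t). pose proof (HB t).
    destruct (lt_eq_lt_dec (A t) (B t)) as [[Hlt|Heq]|Hgt].
    +
      assert (Hl : lam t = A t) by (unfold lam; lia).
      assert (HN : INR (A t) - INR (B t) < 0) by (apply lt_INR in Hlt; lra).
      destruct (Nat.even (A t)) eqn:Ev.
      * assert (Hm : mt t = false) by (unfold mt; rewrite Hl, Ev; apply Nat.ltb_ge; lia).
        rewrite Hm. rewrite Hl.
        destruct (Nat.eq_dec (A t) 0) as [E0|E0]. { pose proof (Htop t E0). lia. }
        assert (A t <> 1%nat) by (intro E1; rewrite E1 in Ev; discriminate).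
        replace (Nat.min (k - 1) (k - A t)) with (k - A t)%nat by lia.
        rewrite sgn_odd. lra. rewrite (par_ne _ (A t) (k - 1)). rewrite Ev; auto. lia.
      * destruct (Nat.le_gt_cases k (A t)).
        { exfalso. assert (E1 : A t = k) by lia. assert (E2 : B t = S k) by lia.
          apply (Hbo t); [rewrite <- E1; exact Ev | split; auto]. }
        assert (Hm : mt t = true) by (unfold mt; rewrite Hl, Ev; apply Nat.ltb_lt; lia).
        rewrite Hm, Hl. replace (Nat.min (k - 1) (k - A t - 1)) with (k - A t - 1)%nat by lia.
        rewrite sgn_odd. lra. rewrite (par_eq _ (A t) (k - 1)). auto. lia.
    + rewrite Heq. replace (INR (B t) - INR (B t)) with 0 by ring. lra.
    +
      assert (Hl : lam t = B t) by (unfold lam; lia).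
      assert (HN : INR (A t) - INR (B t) > 0) by (apply lt_INR in Hgt; lra).
      destruct (Nat.even (B t)) eqn:Ev.
      * destruct (Nat.le_gt_cases k (B t)).
        { exfalso. assert (E1 : B t = k) by lia. assert (E2 : A t = S k) by lia.
          apply (Hbe t); [rewrite <- E1; exact Ev | split; auto]. }
        assert (Hm : mt t = true) by (unfold mt; rewrite Hl, Ev; apply Nat.ltb_lt; lia).
        rewrite Hm, Hl. replace (Nat.min (k - 1) (k - B t - 1)) with (k - B t - 1)%nat by lia.
        rewrite sgn_even. lra. rewrite (par_eq _ (B t) (k - 1)). auto. lia.
      * assert (Hm : mt t = false) by (unfold mt; rewrite Hl, Ev; apply Nat.ltb_ge; lia).
        rewrite Hm, Hl.
        assert (B t <> 0%nat) by (intro E1; rewrite E1 in Ev; discriminate).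
        replace (Nat.min (k - 1) (k - B t)) with (k - B t)%nat by lia.
        rewrite sgn_even. lra. rewrite (par_ne _ (B t) (k - 1)). rewrite Ev; auto. lia.
Qed.


Fixpoint cntn (u : nat -> R) (t : R) (n : nat) : nat :=
  match n with O => O | S n' => (cntn u t n' + if Rlt_dec t (u n') then 1 else 0)%nat end.

Lemma cnt_INR u t n : INR (cntn u t n) = sumn n (fun i => if Rlt_dec t (u i) then 1 else 0).
Proof. induction n; simpl; auto. rewrite plus_INR, IHn. destruct Rlt_dec; simpl; ring. Qed.

Lemma cnt_le u t n : (cntn u t n <= n)%nat.
Proof. induction n; simpl; auto. destruct Rlt_dec; lia. Qed.

Lemma cnt_anti u t1 t2 n : t1 <= t2 -> (cntn u t2 n <= cntn u t1 n)%nat.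
Proof. intros H; induction n; simpl; auto. destruct (Rlt_dec t2 (u n)); destruct (Rlt_dec t1 (u n)); try lia. lra. Qed.

Lemma cnt_zero u t n : cntn u t n = 0%nat -> forall i, (i < n)%nat -> u i <= t.
Proof. induction n; simpl; intros H i Hi. lia. destruct (Rlt_dec t (u n)). lia.
  destruct (Nat.eq_dec i n). subst; lra. apply IHn; lia. Qed.

Lemma cnt_full u t n : cntn u t n = n -> forall i, (i < n)%nat -> t < u i.
Proof. induction n; simpl; intros H i Hi. lia. pose proof (cnt_le u t n).
  destruct (Rlt_dec t (u n)). destruct (Nat.eq_dec i n). subst; auto. apply IHn; lia. lia. Qed.

Lemma cnt_pos u t n : (0 < cntn u t n)%nat -> exists i, (i < n)%nat /\ t < u i.
Proof. induction n; simpl; intros H. lia. destruct (Rlt_dec t (u n)). exists n; auto.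
  destruct IHn as [i [Hi Hi']]. lia. exists i; split; auto. Qed.

Lemma cnt_nfull u t n : (cntn u t n < n)%nat -> exists i, (i < n)%nat /\ u i <= t.
Proof. induction n; simpl; intros H. lia. destruct (Rlt_dec t (u n)).
  destruct IHn as [i [Hi Hi']]. lia. exists i; split; auto. exists n; split; auto; lra. Qed.

Lemma anti_seq (u : nat -> R) k : (forall i, (i < k)%nat -> u (S i) <= u i) ->
  forall i j, (i <= j)%nat -> (j <= k)%nat -> u j <= u i.
Proof. intros H i j Hij Hj. induction Hij. lra. pose proof (H m ltac:(lia)). pose proof (IHHij ltac:(lia)). lra. Qed.

Lemma ind_cnt u t n : sumn n (fun i => if Rle_dec (u i) t then 1 else 0) = INR n - INR (cntn u t n).
Proof. induction n. simpl; ring. simpl sumn. simpl cntn. rewrite S_INR, plus_INR, IHn.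
  destruct (Rle_dec (u n) t); destruct (Rlt_dec t (u n)); simpl; lra. Qed.

Theorem mainTheorem7 (k : nat) (a b : R) (a_ b_ : nat -> R) :
  (1 <= k)%nat ->
  (forall i, (i <= k)%nat -> a <= a_ i <= b) ->
  (forall i, (i <= k)%nat -> a <= b_ i <= b) ->
  (forall i, (i < k)%nat -> a_ (S i) <= a_ i) ->
  (forall i, (i < k)%nat -> b_ (S i) <= b_ i) ->
  b_ 0%nat <= a_ 0%nat ->
  (-1) ^ k * a_ k <= (-1) ^ k * b_ k ->
  (forall j, (1 <= j)%nat -> (j < k)%nat ->
     sum_f_R0 (fun i => a_ i ^ j) k = sum_f_R0 (fun i => b_ i ^ j) k) ->
  forall f : R -> R, k_diff_nonneg_kth k a b f ->
    sum_f_R0 (fun i => f (a_ i)) k >= sum_f_R0 (fun i => f (b_ i)) k.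
Proof.
  intros Hk Ha Hb Hma Hmb Htop Hbot Hpow f Hf.
  rewrite !sum_f_R0_sumn. apply Rle_ge.
  set (v := fun i => if Nat.ltb i (S k) then a_ i else b_ (i - S k)%nat).
  destruct (sort_vals v (b + 1) (2 * S k)) as [m [s [Hs [H1 [H2 H3]]]]].
  { intros i Hi. unfold v. destruct (Nat.ltb_spec i (S k)).
    pose proof (Ha i ltac:(lia)); lra. pose proof (Hb (i - S k)%nat ltac:(lia)); lra. }
  assert (Hcova : forall i, (i < S k)%nat -> exists j, (j < m)%nat /\ s j = a_ i).
  { intros i Hi. destruct (H2 i ltac:(lia)) as [j [Hj E]]. exists j. split; auto. rewrite E. unfold v.
    destruct (Nat.ltb_spec i (S k)); auto; lia. }
  assert (Hcovb : forall i, (i < S k)%nat -> exists j, (j < m)%nat /\ s j = b_ i).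
  { intros i Hi. destruct (H2 (S k + i)%nat ltac:(lia)) as [j [Hj E]]. exists j. split; auto. rewrite E. unfold v.
    destruct (Nat.ltb_spec (S k + i) (S k)). lia. f_equal; lia. }
  set (c := fun j => sumn (S k) (fun i => ind (a_ i) (s j)) - sumn (S k) (fun i => ind (b_ i) (s j))).
  assert (KEY : forall g, sumn (S k) (fun i => g (a_ i)) - sumn (S k) (fun i => g (b_ i)) = sumn m (fun j => c j * g (s j))).
  { intros g. rewrite (regroup s Hs m a_ (S k) Hcova g), (regroup s Hs m b_ (S k) Hcovb g), <- sumn_minus.
    apply sumn_ext; intros; unfold c; ring. }
  assert (Hsab : forall j, (j < m)%nat -> a <= s j <= b).
  { intros j Hj. destruct (H1 j Hj) as [i [Hi E]]. rewrite E. unfold v. destruct (Nat.ltb_spec i (S k)).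
    apply Ha; lia. apply Hb; lia. }
  set (A := fun t => cntn a_ t (S k)). set (B := fun t => cntn b_ t (S k)).
  assert (HcS : forall j, (j < m)%nat -> sumn (S j) c = INR (B (s j)) - INR (A (s j))).
  { intros j Hj. pose proof (KEY (fun x => if Rle_dec x (s j) then 1 else 0)) as E. cbv beta in E.
    rewrite !ind_cnt in E. fold (A (s j)) (B (s j)) in E.
    replace m with (S j + (m - S j))%nat in E by lia. rewrite sumn_split in E.
    rewrite (sumn_zero (m - S j)) in E.
    - rewrite (sumn_ext (S j) _ c) in E. lra.
      intros i Hi. destruct (Rle_dec (s i) (s j)). ring. exfalso. apply n. apply smono_le; auto; lia.
    - intros i Hi. destruct (Rle_dec (s (S j + i)%nat) (s j)). pose proof (smono_lt s Hs j (S j + i) ltac:(lia)). lra. ring. }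
  destruct (SC_N A B k Hk) as [T [HT1 [HT2 HT3]]].
  - intros; apply cnt_le.
  - intros; apply cnt_le.
  - intros; split; apply cnt_anti; auto.
  - intros t HA0. unfold A, B in *. pose proof (cnt_zero _ _ _ HA0 0%nat ltac:(lia)).
    destruct (cntn b_ t (S k)) eqn:EB; auto. exfalso.
    destruct (cnt_pos b_ t (S k)) as [i [Hi Hi']]. lia.
    pose proof (anti_seq b_ k Hmb 0 i ltac:(lia) ltac:(lia)). lra.
  - intros t Ev [EA EB]. unfold A, B in *.
    pose proof (cnt_full _ _ _ EA k ltac:(lia)).
    destruct (cnt_nfull b_ t (S k)) as [i [Hi Hi']]. lia.
    pose proof (anti_seq b_ k Hmb i k ltac:(lia) ltac:(lia)).
    apply Nat.even_spec in Ev. destruct Ev as [h Eh]. rewrite Eh, pow_1_even in Hbot. rewrite <- Eh in Hbot. lra.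
  - intros t Ev [EA EB]. unfold A, B in *.
    pose proof (cnt_full _ _ _ EB k ltac:(lia)).
    destruct (cnt_nfull a_ t (S k)) as [i [Hi Hi']]. lia.
    pose proof (anti_seq a_ k Hma i k ltac:(lia) ltac:(lia)).
    assert (E : (-1)^k = -1) by (apply (sgn_odd k Ev)). rewrite E in Hbot. lra.
  - assert (0 <= sumn m (fun j => c j * f (s j))).
    { apply (core a b s Hs c m k f Hk Hsab); auto.
      - intros p Hp. rewrite <- (KEY (fun x => x ^ p)). cbv beta.
        destruct p. rewrite (sumn_ext (S k) (fun i => a_ i ^ 0) (fun i => b_ i ^ 0)); [ring|]. intros; simpl; auto.
        rewrite <- !sum_f_R0_sumn. rewrite Hpow by lia. ring.
      - exists (fun j => T (s j)). split; [|split].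
        + intros i j Hij Hj. apply HT1. apply smono_le; auto.
        + intros; apply HT2.
        + intros j Hj. change (W s c 1 j) with ((s (j + 1)%nat - s j) * - sumn (S j) c). rewrite HcS by lia.
          pose proof (HT3 (s j)). pose proof (Hs j). replace (j + 1)%nat with (S j) by lia.
          replace (sgn (k - 1 + T (s j)) * ((s (S j) - s j) * - (INR (B (s j)) - INR (A (s j)))))
            with ((s (S j) - s j) * (sgn (k - 1 + T (s j)) * (INR (A (s j)) - INR (B (s j))))) by ring.
          apply Rmult_le_pos; lra. }
    rewrite <- KEY in H. lra.
Qed.
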